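(* Let $r\in\mathbb{N}$ with $r\ge2$, let $u,v,w\in\mathbb{YF}^r$, and let $i,j\in\{1,\dots,r\}$ with $i\ne j$. Then $$d_r(w1_iu,\,v1_ju)\le d_r(w1_iu,\,v2u),$$ where juxtaposition denotes concatenation of words.
   Context: Fix $r\in\mathbb{N}$. Words. Vertices of $\mathbb{YF}^r$ are finite words over $\{1_1,\dots,1_r,2\}$. A letter $1_i$ is a one with digit value $1$; $2$ is a two with digit value $2$. $|x|$ is the digit sum. The graph $\mathbb{YF}^r$. It is graded by $|\cdot|$. From $x$ there is a downward edge to every word obtained by one of two operations: (i) delete the leftmost one; (ii) replace a $2$ lying left of the leftmost one (any $2$ if there are no ones) by $1_i$, with arbitrary $i$. Path counts. $d_r(x,y)$ is the number of downward paths $y=y_n\to\dots\to y_m=x$ in $\mathbb{YF}^r$ with $|y_i|=i$ ($0$ if none). *)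

(* Defs.v *)
From mathcomp Require Import all_boot.
Set Implicit Arguments. Unset Strict Implicit. Unset Printing Implicit Defensive.

(* Letters of YF^r: [Some k] (k : 'I_r) is the one 1_{k+1}; [None] is the two 2.
   (Indices are 0-based: 'I_r = {0,...,r-1} stands for {1,...,r}.) *)
Definition letter (r : nat) := option 'I_r.
Definition word (r : nat) := seq (letter r).

Definition digit r (a : letter r) : nat := if a is Some _ then 1 else 2.
Definition weight r (x : word r) : nat := sumn (map (@digit r) x).

Definition is_one r (a : letter r) : bool := if a is Some _ then true else false.

(* Down-neighbours of x in YF^r:
   (i) delete the leftmost one;
   (ii) replace a 2 lying left of the leftmost one (any 2 if there is no one)
        by 1_k, k arbitrary. *)
Definition down r (x : word r) : seq (word r) :=
  let p := find (@is_one r) x in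
  undup
   ((if p < size x then [:: take p x ++ drop p.+1 x] else [::]) ++
    [seq set_nth None x q (Some k)
       | q <- [seq q <- iota 0 p | nth None x q == None]
       , k <- enum 'I_r]).

Fixpoint npaths r (n : nat) (y x : word r) : nat :=
  if n is n'.+1 then sumn [seq npaths n' z x | z <- down y]
  else (y == x : nat).

(* d_r(x, y): number of downward paths y = y_n -> ... -> y_m = x with |y_i| = i
   (each edge lowers the weight by exactly 1). *)
Definition d r (x y : word r) : nat :=
  if weight x <= weight y then npaths (weight y - weight x) y x else 0.

(* Main.v *)
Require Import Defs.
From mathcomp Require Import all_boot.
Set Implicit Arguments. Unset Strict Implicit.

Lemma set_nth_catl T (x0 : T) (s1 s2 : seq T) n y : n < size s1 ->
  set_nth x0 (s1 ++ s2) n y = set_nth x0 s1 n y ++ s2.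
Proof. by elim: s1 n => [|a s1 IH] [|n] //= H; rewrite IH. Qed.

Lemma set_nth_catr T (x0 : T) (s1 s2 : seq T) y :
  set_nth x0 (s1 ++ s2) (size s1) y = s1 ++ set_nth x0 s2 0 y.
Proof. by elim: s1 => [|a s1 IH] //=; rewrite IH. Qed.

Lemma sumn_le T (F G : T -> nat) s : (forall x, F x <= G x) ->
  sumn (map F s) <= sumn (map G s).
Proof. by move=> H; elim: s => //= a s IH; apply: leq_add. Qed.

Lemma sumn_mem (T : eqType) (F : T -> nat) s z : z \in s -> F z <= sumn (map F s).
Proof.
elim: s => //= a s IH; rewrite inE => /orP [/eqP -> | /IH H]; first exact: leq_addr.
exact: leq_trans H (leq_addl _ _).
Qed.

Lemma weight_cat r (s t : word r) : weight (s ++ t) = weight s + weight t.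
Proof. by rewrite /weight map_cat sumn_cat. Qed.

Lemma drop_catl T (s1 s2 : seq T) n : n <= size s1 -> drop n (s1 ++ s2) = drop n s1 ++ s2.
Proof. elim: s1 n => [|a s1 IH] [|n] //= H; last by rewrite IH. by rewrite drop0. Qed.

Lemma cats_inj (T : eqType) (s : seq T) : injective (cat^~ s).
Proof.
move=> a b /= E; have Hs : size a = size b.
  by move: (congr1 size E); rewrite !size_cat => /eqP; rewrite eqn_add2r => /eqP.
by move/eqP: E; rewrite eqseq_cat // => /andP [/eqP].
Qed.

Definition Dv r (v : word r) : seq (word r) :=
  let p := find (@is_one r) v in
  (take p v ++ drop p.+1 v) ::
   [seq set_nth None v q (Some k)
       | q <- [seq q <- iota 0 p | nth None v q == None]
       , k <- enum 'I_r].

Lemma down_cat r (v s : word r) : has (@is_one r) v ->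
  down (v ++ s) = map (cat^~ s) (undup (Dv v)).
Proof.
move=> hv; rewrite -undup_map_inj; last exact: cats_inj.
rewrite /down /Dv find_cat hv.
have hp : find (@is_one r) v < size v by rewrite -has_find.
rewrite size_cat (leq_trans hp (leq_addr _ _)) take_cat hp drop_catl //.
rewrite /= map_allpairs -catA; congr (undup (_ :: _)).
have -> : [seq q <- iota 0 (find (is_one (r:=r)) v) | nth None (v ++ s) q == None]
  = [seq q <- iota 0 (find (is_one (r:=r)) v) | nth None v q == None].
  apply: eq_in_filter => q; rewrite mem_iota add0n => /andP [_ hq].
  by rewrite nth_cat (ltn_trans hq hp).
apply/eq_in_allpairs => q k; rewrite mem_filter mem_iota add0n => /andP [_ /andP [_ hq]] _.
by rewrite set_nth_catl // (ltn_trans hq hp).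
Qed.

Lemma mem_down_no r (v u : word r) j : ~~ has (@is_one r) v ->
  v ++ Some j :: u \in down (v ++ None :: u).
Proof.
move=> hv; rewrite /down find_cat (negbTE hv) mem_undup mem_cat; apply/orP; right.
have -> : v ++ Some j :: u = set_nth None (v ++ None :: u) (size v) (Some j).
  by rewrite set_nth_catr.
apply: allpairs_f; last by rewrite mem_enum.
rewrite mem_filter nth_cat ltnn subnn eqxx /= mem_iota add0n /=.
by rewrite addnS ltnS leq_addr.
Qed.


Lemma key r (u w : word r) (i j : 'I_r) : i != j -> forall n (v : word r),
  npaths n (v ++ Some j :: u) (w ++ Some i :: u)
  <= npaths n.+1 (v ++ None :: u) (w ++ Some i :: u).
Proof.
move=> hij n v; case hv: (has (@is_one r) v).
  elim: n v hv => [|n IH] v hv.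
    rewrite /=; case: eqP => [E|_]; last exact: leq0n.
    have Hs : size v = size w.
      by move: (congr1 size E); rewrite !size_cat /= => /eqP; rewrite eqn_add2r => /eqP.
    move/eqP: E; rewrite eqseq_cat // => /andP [_ /eqP [E]].
    by move: hij; rewrite E eqxx.
  rewrite [npaths n.+1 _ _]/= [npaths n.+2 _ _]/= !down_cat // -!map_comp.
  apply: sumn_le => V /=.
  case hV: (has (@is_one r) V); first exact: IH.

  exact: (sumn_mem (fun z => npaths n z (w ++ Some i :: u))) (mem_down_no u j (negbT hV)).
rewrite [npaths n.+1 _ _]/=.
exact: (sumn_mem (fun z => npaths n z (w ++ Some i :: u))) (mem_down_no u j (negbT hv)).
Qed.

Theorem mainTheorem10 (r : nat) (hr : 2 <= r) (u v w : word r) (i j : 'I_r)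
  (hij : i != j) :
  d (w ++ Some i :: u) (v ++ Some j :: u) <= d (w ++ Some i :: u) (v ++ None :: u).
Proof.
have wc : forall (a : letter r) s, weight (a :: s) = digit a + weight s by [].
rewrite /d !weight_cat !wc /=.
have -> : weight v + (2 + weight u) = (weight v + (1 + weight u)).+1 by rewrite !addnS.
case: ifP => h; last by [].
rewrite (leq_trans h (leqnSn _)) subSn //.
exact: key.
Qed.
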